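(* Let $q=3^k$ for some $k\ge 1$, and pick $a,b,c,d\in\mathbb{F}_q$ with $ac\ne 0$. Then $f(X):=X^9+aX^5+bX^3+cX^2+dX$ does not permute $\mathbb{F}_q$. *)

(* Defs.v *)
From mathcomp Require Import all_boot all_order all_algebra all_field.
Set Implicit Arguments. Unset Strict Implicit. Unset Printing Implicit Defensive.
Import GRing.Theory.
Local Open Scope ring_scope.

Definition permutes (F : finFieldType) (f : F -> F) : Prop := bijective f.

(* Main.v *)
Require Import Defs.
From mathcomp Require Import all_boot all_order all_algebra all_field.
From mathcomp Require Import zify ring lra.
From Stdlib Require PeanoNat.
Set Implicit Arguments. Unset Strict Implicit. Unset Printing Implicit Defensive.
Import GRing.Theory.
Local Open Scope ring_scope.

Fixpoint div3 (n : nat) : option nat :=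
  match n with
  | 0 => Some 0%N
  | 1 => None
  | 2 => None
  | S (S (S n')) => option_map S (div3 n')
  end.

Lemma div3P n : match div3 n with Some s => n = (3 * s)%N | None => ~~ (3 %| n)%N end.
Proof.
elim/ltn_ind: n => -[|[|[|n]]] IH //=.
have h3 : (n < n.+3)%N by lia.
have := IH n h3; case: (div3 n) => [s|] /= h.
  by lia.
by rewrite -[n.+3](addn3) dvdn_addl.
Qed.

Definition SC (F : ringType) (H : {poly F}) (P r : nat) : F :=
  if Nat.leb r P then H`_(Nat.sub P r) else 0.

Lemma lebE r P : Nat.leb r P = (r <= P)%N.
Proof. by apply/idP/idP => [/PeanoNat.Nat.leb_le/leP|/leP/PeanoNat.Nat.leb_le]. Qed.

Definition fj (F : ringType) (a b c d : F) (j : nat) : {poly F} :=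
  'X^9 + (a ^+ (3 ^ j)) *: 'X^5 + (b ^+ (3 ^ j)) *: 'X^3
  + (c ^+ (3 ^ j)) *: 'X^2 + (d ^+ (3 ^ j)) *: 'X^1.

Lemma SC_f (F : comRingType) (a b c d : F) j H P r :
  SC (fj a b c d j * H) P r =
  SC H P (Nat.add r 9) + a ^+ (3 ^ j) * SC H P (Nat.add r 5)
  + b ^+ (3 ^ j) * SC H P (Nat.add r 3) + c ^+ (3 ^ j) * SC H P (Nat.add r 2)
  + d ^+ (3 ^ j) * SC H P (Nat.add r 1).
Proof.
rewrite /SC /fj !mulrDl !coefD -!scalerAl !coefZ !coefXnM !lebE.
have E : forall e, Nat.add r e = (r + e)%N by [].
rewrite !E.
case: (leqP r P) => hr; last first.
  by rewrite !(leqNgt _ P) !(ltn_addr _ hr) !mulr0 !addr0.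
have G : forall e, (if (P - r < e)%N then (0:F) else H`_(P - r - e)) =
   if (r + e <= P)%N then H`_(Nat.sub P (r + e)) else 0.
  move=> e; have -> : Nat.sub P (r + e) = (P - r - e)%N by rewrite -subnDA.
  by case: (ltnP (P - r) e) => h; [rewrite ifF //; lia | rewrite ifT //; lia].
by rewrite !G.
Qed.

Definition opt (F : ringType) (f : nat -> F) (o : option nat) : F :=
  match o with Some s => f s | None => 0 end.

Lemma opt_eq (F : ringType) (f g : nat -> F) : f =1 g -> forall o, opt f o = opt g o.
Proof. by move=> e [s|] //=. Qed.

Lemma SC_comp3 (F : comRingType) (H : {poly F}) P r :
  SC (H \Po 'X^3) (3 * P) r = opt (SC H P) (div3 r).
Proof. rewrite /opt.
rewrite /SC coef_comp_poly_Xn //.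
have := div3P r; case: (div3 r) => [s ->|nd]; rewrite !lebE.
  rewrite leq_pmul2l //; case: (leqP s P) => // hs.
  have -> : Nat.sub (3 * P) (3 * s) = (3 * (P - s))%N by rewrite mulnBr.
  by rewrite dvdn_mulr // mulKn.
case: (leqP r (3 * P)) => // hr.
have : ~~ (3 %| (3 * P - r))%N.
  apply: contra nd => h; have := dvdn_sub (dvdn_mulr P (dvdnn 3)) h.
  by rewrite subKn.
by move/negbTE => /= ->.
Qed.

Fixpoint G (F : ringType) (a b c d : F) (m j : nat) : {poly F} :=
  match m with
  | 0 => 1
  | m'.+1 => fj a b c d j * (G a b c d m' j.+1 \Po 'X^3)
  end.

Fixpoint V (F : ringType) (a b c d : F) (m j r : nat) : F :=
  match m with
  | 0 => if Nat.eqb r 3 then 1 else 0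
  | m'.+1 =>
    opt (V a b c d m' j.+1) (div3 (Nat.add r 9))
    + a ^+ (3 ^ j) * opt (V a b c d m' j.+1) (div3 (Nat.add r 5))
    + b ^+ (3 ^ j) * opt (V a b c d m' j.+1) (div3 (Nat.add r 3))
    + c ^+ (3 ^ j) * opt (V a b c d m' j.+1) (div3 (Nat.add r 2))
    + d ^+ (3 ^ j) * opt (V a b c d m' j.+1) (div3 (Nat.add r 1))
  end.

Lemma SC_G (F : comRingType) (a b c d : F) m j r :
  SC (G a b c d m j) (3 ^ m.+1) r = V a b c d m j r.
Proof.
elim: m j r => [|m IH] j r.
  rewrite /SC /= coef1 lebE.
  case: r => [|[|[|[|r]]]] //=.
have IH' : SC (G a b c d m j.+1) (3 ^ m.+1) =1 V a b c d m j.+1 by move=> s; apply: IH.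
have -> : G a b c d m.+1 j = fj a b c d j * (G a b c d m j.+1 \Po 'X^3) by [].
rewrite expnS SC_f !SC_comp3 !(opt_eq IH').
by [].
Qed.

Lemma Vzero (F : comRingType) (a b c d : F) m j :
  [/\ V a b c d m j 1 = 0, V a b c d m j 2 = 0 & V a b c d m j 5 = 0].
Proof.
elim: m j => [|m IH] j; first by [].
have [h1 h2 h5] := IH j.+1.
by split; rewrite /= ?h1 ?h2 ?h5 ?mulr0 ?addr0 ?add0r.
Qed.

Lemma V3 (F : comRingType) (a b c d : F) m j :
  V a b c d m.+1 j 3 = V a b c d m j.+1 4.
Proof. by have [h1 h2 h5] := Vzero a b c d m j.+1; rewrite /= h2 !mulr0 !addr0. Qed.

Lemma V4 (F : comRingType) (a b c d : F) m j :
  V a b c d m.+1 j 4 = a ^+ (3 ^ j) * V a b c d m j.+1 3.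
Proof. by have [h1 h2 h5] := Vzero a b c d m j.+1; rewrite /= h2 !mulr0 !addr0 add0r. Qed.

Lemma Vnz (F : fieldType) (a b c d : F) : a != 0 -> forall m j,
  (odd m -> V a b c d m j 3 = 0 /\ V a b c d m j 4 != 0) /\
  (~~ odd m -> V a b c d m j 4 = 0 /\ V a b c d m j 3 != 0).
Proof.
move=> a0; elim=> [|m IH] j; first by split => //= _; rewrite oner_neq0.
have [IHo IHe] := IH j.+1.
rewrite V3 V4 /=; split => h.
  have [-> nz] := IHe h; split => //.
  by rewrite mulf_neq0 // expf_neq0.
by rewrite negbK in h; have [-> nz] := IHo h; rewrite mulr0.
Qed.

Lemma fj_frob (F : comRingType) (a b c d : F) j x : (3 \in [pchar F])%N ->
  (fj a b c d j).[x] ^+ 3 = (fj a b c d j.+1).[x ^+ 3].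
Proof.
move=> p3; have n3 : ([pchar F]).-nat 3 by rewrite pnatE.
rewrite -(pFrobenius_autE p3 ((fj a b c d j).[x])) /fj !(hornerD, hornerZ, hornerXn) !rmorphD !(rmorphM _ (a ^+ _)) !(rmorphM _ (b ^+ _)) !(rmorphM _ (c ^+ _)) !(rmorphM _ (d ^+ _)) !rmorphXn.
by rewrite !expnS !exprM.
Qed.

Fixpoint Ex (m : nat) : nat := if m is m'.+1 then (3 * Ex m').+1 else 0.

Lemma G_horner (F : comRingType) (a b c d : F) m j x : (3 \in [pchar F])%N ->
  (G a b c d m j).[x] = (fj a b c d j).[x] ^+ Ex m.
Proof.
move=> p3; elim: m j x => [|m IH] j x; first by rewrite /= hornerE.
rewrite /= hornerM horner_comp hornerXn IH -fj_frob // -exprM exprS.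
by [].
Qed.

Lemma big_shift (R : ringType) (w : nat -> R) a Q :
  \sum_(a <= i < a + Q) w i = \sum_(0 <= i < Q) w (i + a)%N.
Proof.
have := @big_addn R 0 +%R 0%N (a + Q) a xpredT w.
by rewrite add0n addKn.
Qed.

Lemma block_sum (R : ringType) (w : nat -> R) Q B : (0 < Q)%N ->
  \sum_(0 <= i < B.+1 * Q) w i * (if (0 < i)%N && (Q %| i)%N then -1 else 0)
  = - \sum_(N < B) w (N.+1 * Q)%N.
Proof.
case: Q => [//|Q] _; elim: B => [|B IH].
  rewrite big_ord0 oppr0 mul1n big_nat_cond big1 // => i /andP[/andP[_ hi] _].
  case: (ltnP 0 i) => [i0|]; last by rewrite andFb mulr0.
  by case: (boolP (Q.+1 %| i)%N) => [/(dvdn_leq i0)|] h; [lia | rewrite andbF mulr0].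
rewrite mulSn addnC (@big_cat_nat _ _ _ (B.+1 * Q.+1)%N) ?leq_addr // IH.
rewrite big_shift big_nat_recl // add0n.
have blk : \sum_(0 <= i < Q) w (i.+1 + B.+1 * Q.+1)%N *
   (if (0 < i.+1 + B.+1 * Q.+1)%N && (Q.+1 %| i.+1 + B.+1 * Q.+1)%N then -1 else 0) = 0.
  rewrite big_nat_cond big1 // => i /andP[/andP[_ hi] _].
  rewrite ifF ?mulr0 //; apply/negbTE; rewrite negb_and; apply/orP; right.
  rewrite dvdn_addl ?dvdn_mull //; apply/negP => h; have := dvdn_leq (ltn0Sn i) h; lia.
rewrite blk addr0 ifT; last by apply/andP; split; [lia | rewrite dvdn_mull].
by rewrite big_ord_recr /= mulrN1 opprD.
Qed.

Lemma unit_pow (F : finFieldType) (x : F) : x != 0 -> x ^+ #|F|.-1 = 1.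
Proof.
move=> x0; have c0 : (0 < #|F|)%N by apply/card_gt0P; exists x.
have := expf_card x; rewrite -(prednK c0) exprS => h.
by apply: (mulfI x0); rewrite h mulr1.
Qed.

Lemma powsum (F : finFieldType) (hq0 : (#|F|)%:R = 0 :> F) (q1 : (1 < #|F|)%N) n :
  \sum_(x : F) x ^+ n = if (0 < n)%N && (#|F|.-1 %| n)%N then -1 else 0.
Proof.
set Q := #|F|.-1.
have Q0 : (0 < Q)%N by rewrite /Q; lia.
have qQ : #|F| = Q.+1 by rewrite /Q; lia.
case: n => [|n].
  by rewrite /= (eq_bigr (fun _ => 1)) // sumr_const; exact: hq0.
case: (boolP (Q %| n.+1)%N) => hd /=.
  rewrite (bigD1 0) //= expr0n /= add0r.
  have [u hu] : exists u, n.+1 = (u * Q)%N by exists (n.+1 %/ Q)%N; rewrite divnK.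
  rewrite (eq_bigr (fun _ => 1)); last first.
    by move=> x x0; rewrite hu mulnC exprM unit_pow // expr1n.
  rewrite sumr_const cardC1 -/Q.
  apply: (addIr 1); rewrite addNr -{2}(mulr1n (1:F)) -natrD addn1 -qQ.
  exact: hq0.
have [g /andP [g0 gn]] : exists g : F, (g != 0) && (g ^+ n.+1 != 1).
  case: (boolP [exists x : F, (x != 0) && (x ^+ n.+1 != 1)]) => [/existsP //|/existsPn H].
  set r := (n.+1 %% Q)%N.
  have r0 : (0 < r)%N by rewrite lt0n; apply: contra hd => /eqP h; rewrite /dvdn -/r h.
  have rQ : (r < Q)%N by rewrite ltn_pmod.
  have allr : all (r.-unity_root) (enum (predC1 (0:F))).
    apply/allP => x; rewrite mem_enum inE => x0; rewrite unity_rootE.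
    have := H x; rewrite x0 /= negbK => /eqP.
    rewrite (divn_eq n.+1 Q) -/r exprD mulnC exprM unit_pow // expr1n mul1r => ->.
    by [].
  have := max_unity_roots r0 allr (enum_uniq _).
  rewrite -cardE cardC1 -/Q; lia.
have : \sum_(x : F) x ^+ n.+1 = g ^+ n.+1 * \sum_(x : F) x ^+ n.+1.
  rewrite [LHS](reindex_inj (mulfI g0)) mulr_sumr; apply: eq_bigr => x _.
  by rewrite exprMn.
move/eqP; rewrite -subr_eq0 -{1}(mul1r (\sum_x _)) -mulrBl mulf_eq0 subr_eq0.
by rewrite eq_sym (negbTE gn) /= => /eqP.
Qed.

Lemma sum_poly (F : finFieldType) (hq0 : (#|F|)%:R = 0 :> F) (q1 : (1 < #|F|)%N)
   (P : {poly F}) B : (size P <= B.+1 * #|F|.-1)%N ->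
  \sum_(x : F) P.[x] = - \sum_(N < B) P`_(N.+1 * #|F|.-1).
Proof.
move=> hs.
rewrite (eq_bigr (fun x => \sum_(i < B.+1 * #|F|.-1) P`_i * x ^+ i)); last first.
  by move=> x _; rewrite (horner_coef_wide _ hs).
rewrite exchange_big /=.
rewrite (eq_bigr (fun i : 'I__ => P`_i *
   (if (0 < i)%N && (#|F|.-1 %| i)%N then -1 else 0))); last first.
  by move=> i _; rewrite -mulr_sumr powsum.
rewrite -(big_mkord xpredT (fun i => P`_i *
   (if (0 < i)%N && (#|F|.-1 %| i)%N then -1 else 0))).
rewrite block_sum //. move: q1; case: #|F| => [|[|]] //.
Qed.

Lemma SC_coef (F : ringType) (P : {poly F}) Q N : (N <= Q)%N -> SC P Q N = P`_(Q - N).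
Proof. by move=> h; rewrite /SC lebE h. Qed.

Lemma chase1 (F : comRingType) (a b c d : F) m :
  SC (fj a b c d 0 * G a b c d m.+1 0) (3 ^ m.+2) 1 =
  2%:R * c * V a b c d m 1 4 + 2%:R * a * b * V a b c d m 1 3.
Proof.
have [h1 h2 h5] := Vzero a b c d m 1.
rewrite SC_f !SC_G /= h1 h2 h5 expn0 !expr1.
ring.
Qed.

Lemma chase2 (F : comRingType) (a b c d : F) m : b = 0 -> V a b c d m 3 4 = 0 ->
  SC (fj a b c d 0 * ((fj a b c d 1 * ((fj a b c d 2 * G a b c d m.+1 2) \Po 'X^3)) \Po 'X^3))
     (3 ^ m.+4) 1 =
  2%:R * c * a ^+ 3 * a ^+ 9 * c ^+ 9 * V a b c d m 3 3.
Proof.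
move=> b0 v4.
have [h1 h2 h5] := Vzero a b c d m 3.
rewrite SC_f (expnS 3 m.+3) !SC_comp3; cbn [div3 opt Nat.add option_map].
rewrite !SC_f (expnS 3 m.+2) !SC_comp3; cbn [div3 opt Nat.add option_map].
rewrite !(SC_f _ _ _ _ 2 (G a b c d m.+1 2)) !SC_G; cbn [V div3 opt Nat.add option_map Nat.eqb].
rewrite h1 h2 h5 v4 b0 expn0 expn1 !expr1 (_ : (3 ^ 2 = 9)%N) // !expr0n /=.
ring.
Qed.

Lemma size_fj (F : ringType) (a b c d : F) j : (size (fj a b c d j) <= 10)%N.
Proof.
rewrite /fj; apply/leq_sizeP => i hi.
rewrite !coefD !coefZ !coefXn.
have h : forall e, (e < 10)%N -> (i == e) = false by move=> e he; apply/eqP; lia.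
by rewrite !h // !mulr0 !addr0.
Qed.

Lemma size_comp3 (F : ringType) (H : {poly F}) :
  (size (H \Po 'X^3) <= ((size H).-1 * 3).+1)%N.
Proof. by have := size_comp_poly_leq H 'X^3; rewrite size_polyXn. Qed.

Lemma size_mulfj (F : ringType) (a b c d : F) j (H : {poly F}) n :
  (size H <= n.+1)%N -> (size (fj a b c d j * H)%R <= n + 10)%N.
Proof.
move=> hH; apply: (leq_trans (size_polyMleq _ _)).
have := size_fj a b c d j; lia.
Qed.

Lemma size_comp3' (F : ringType) (H : {poly F}) n :
  (size H <= n.+1)%N -> (size (H \Po 'X^3) <= (3 * n).+1)%N.
Proof. move=> hH; apply: (leq_trans (size_comp3 H)); lia. Qed.

Lemma size_G (F : ringType) (a b c d : F) m j :
  (size (G a b c d m j) <= (9 * Ex m).+1)%N.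
Proof.
elim: m j => [|m IH] j; first by rewrite /= size_poly1.
have := size_mulfj a b c d j (size_comp3' (IH j.+1)).
rewrite /=; lia.
Qed.

Lemma ExE (m : nat) : (3 ^ m = (2 * Ex m).+1)%N.
Proof. by elim: m => //= m IH; rewrite expnS IH; lia. Qed.

Lemma fj0E (F : ringType) (a b c d x : F) :
  (fj a b c d 0).[x] = x ^+ 9 + a * x ^+ 5 + b * x ^+ 3 + c * x ^+ 2 + d * x.
Proof. by rewrite /fj !(hornerD, hornerZ, hornerXn) expn0 !expr1. Qed.

Lemma coef_fj (F : ringType) (a b c d : F) j i :
  (fj a b c d j)`_i = (i == 9)%:R + a ^+ (3 ^ j) * (i == 5)%:R + b ^+ (3 ^ j) * (i == 3)%:R
     + c ^+ (3 ^ j) * (i == 2)%:R + d ^+ (3 ^ j) * (i == 1)%:R.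
Proof. by rewrite /fj !coefD !coefZ !coefXn. Qed.

Lemma SC_fj (F : ringType) (a b c d : F) j L r :
  SC (fj a b c d j) L r = if Nat.leb r L then (fj a b c d j)`_(Nat.sub L r) else 0.
Proof. by []. Qed.

Lemma SC_1 (F : ringType) L r :
  SC (1 : {poly F}) L r = if Nat.leb r L then (Nat.sub L r == 0)%:R else 0.
Proof. by rewrite /SC coef1. Qed.

Lemma q9_t2 (F : comRingType) (a b c d : F) :
  SC (fj a b c d 0 * fj a b c d 0) 9 1 + SC (fj a b c d 0 * fj a b c d 0) 18 2
  = 2%:R * a * b.
Proof.
rewrite !SC_f !SC_fj; cbn [Nat.add Nat.sub Nat.leb].
rewrite !coef_fj /= expn0 !expr1.
ring.
Qed.

Definition P9 (F : ringType) (a b c d : F) : {poly F} :=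
  fj a b c d 0 * (fj a b c d 0 * (fj a b c d 1 \Po 'X^3)).

Lemma q9_t5 (F : comRingType) (a b c d : F) : b = 0 ->
  SC (P9 a b c d) 9 1 + SC (P9 a b c d) 18 2 + SC (P9 a b c d) 27 3
  + SC (P9 a b c d) 36 4 + SC (P9 a b c d) 45 5
  = c ^+ 3 * ((1 + d) ^+ 2 + a ^+ 2).
Proof.
move=> b0; rewrite /P9 !SC_f !(SC_comp3 _ 3) !(SC_comp3 _ 6) !(SC_comp3 _ 9) !(SC_comp3 _ 12)
  !(SC_comp3 _ 15).
cbn [Nat.add div3 opt option_map].
rewrite !SC_fj; cbn [Nat.add Nat.sub Nat.leb].
rewrite !coef_fj /= expn0 expn1 !expr1 b0.
ring.
Qed.

Lemma chase2_k4 (F : comRingType) (a b c d : F) :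
  SC (fj a b c d 0 * ((fj a b c d 1 * ((fj a b c d 2 * G a b c d 1 2) \Po 'X^3)) \Po 'X^3))
     162 2 = 0.
Proof.
rewrite SC_f !(SC_comp3 _ 54); cbn [div3 opt Nat.add option_map].
rewrite !SC_f !(SC_comp3 _ 18); cbn [div3 opt Nat.add option_map].
rewrite !SC_f !(SC_comp3 _ 6); cbn [div3 opt Nat.add option_map].
rewrite !SC_1; cbn [Nat.add Nat.sub Nat.leb] => /=.
by rewrite !(mulr0, addr0, add0r).
Qed.

Unset Implicit Arguments.

Theorem proposition4p3 (F : finFieldType) (k : nat) (hk : (1 <= k)%N)
  (hq : #|F| = (3 ^ k)%N) (a b c d : F) (hac : a * c != 0) :
  ~ permutes (fun x : F => x ^+ 9 + a * x ^+ 5 + b * x ^+ 3 + c * x ^+ 2 + d * x).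
Proof.
rewrite /permutes => bij.
set fx := (fun x : F => _) in bij.
have inj : injective fx by apply: bij_inj.
have p3 : (3 \in [pchar F])%N by apply: (card_finPcharP hq).
have hq0 : (#|F|)%:R = 0 :> F.
  by rewrite hq natrX (pcharf0 p3) expr0n; case: (k) hk.
have q1 : (1 < #|F|)%N by rewrite hq; case: (k) hk => // k' _; rewrite expnS; have := expn_gt0 3 k'; lia.
have a0 : a != 0 by apply: contra hac => /eqP ->; rewrite mul0r.
have c0 : c != 0 by apply: contra hac => /eqP ->; rewrite mulr0.
have two0 : (2%:R : F) != 0.
  apply/negP => /eqP h2; have := pcharf0 p3.
  by rewrite (_ : 3 = 2 + 1)%N // natrD h2 add0r => /eqP; rewrite oner_eq0.
have herm : forall t, (0 < t < #|F|.-1)%N -> \sum_(x : F) (fx x) ^+ t = 0.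
  move=> t /andP [t0 tq].
  rewrite -(reindex_inj (P:=xpredT) (F:=fun y => y ^+ t) inj) powsum // t0 /=.
  by rewrite ifF //; apply/negP => /(dvdn_leq t0); rewrite leqNgt tq.
have hP : forall (P : {poly F}) t, (forall x, P.[x] = (fx x) ^+ t) ->
    (0 < t < #|F|.-1)%N -> \sum_(x : F) P.[x] = 0.
  by move=> P t hPx ht; rewrite (eq_bigr _ (fun x _ => hPx x)) herm.
have hfx : forall x, (fj a b c d 0).[x] = fx x by move=> x; rewrite fj0E.
have coefq : forall P : {poly F}, P`_(#|F|.-1) = SC P #|F| 1.
  by move=> P; rewrite SC_coef ?subn1 //; lia.
have Hgen : forall m, k = m.+2 -> (0 < m)%N ->
    2%:R * c * V a b c d m 1 4 + 2%:R * a * b * V a b c d m 1 3 = 0.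
  move=> m km m0.
  set P1 := fj a b c d 0 * G a b c d m.+1 0.
  have P1x : forall x, P1.[x] = fx x ^+ (Ex m.+1).+1.
    by move=> x; rewrite hornerM G_horner // hfx exprS.
  have E0 : (0 < Ex m)%N by case: (m) m0.
  have qE : #|F| = (9 * (2 * Ex m).+1)%N by rewrite hq km !expnS ExE; lia.
  have ht : (0 < (Ex m.+1).+1 < #|F|.-1)%N by rewrite qE /=; lia.
  have hs : (size P1 <= 2 * #|F|.-1)%N.
    apply: (leq_trans (size_mulfj _ _ _ _ _ (size_G a b c d m.+1 0))).
    rewrite qE /=; lia.
  have := hP P1 _ P1x ht.
  rewrite (sum_poly hq0 q1 hs) big_ord1 mul1n coefq hq km chase1.
  by move/eqP; rewrite oppr_eq0 => /eqP.
have Heven : forall m', k = m'.+4 -> ~~ odd m' -> b = 0 -> False.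
  move=> m' km em b0.
  set P2 := fj a b c d 0 * ((fj a b c d 1 * ((fj a b c d 2 * G a b c d m'.+1 2)
               \Po 'X^3)) \Po 'X^3).
  have P2x : forall x, P2.[x] = fx x ^+ (13 + 9 * Ex m'.+1).
    move=> x; rewrite /P2 hornerM horner_comp hornerXn hornerM horner_comp hornerXn hornerM G_horner //.
    rewrite -!fj_frob // hfx -!exprM -[fx x in LHS]expr1 -!exprD.
    congr (_ ^+ _); lia.
  have qE : #|F| = (81 * (2 * Ex m').+1)%N by rewrite hq km !expnS ExE; lia.
  have ht : (0 < 13 + 9 * Ex m'.+1 < #|F|.-1)%N by rewrite qE /=; lia.
  have hs0 : (size P2 <= 243 * Ex m' + 199)%N.
    have s1 := size_G a b c d m'.+1 2.
    have s2 := size_mulfj a b c d 2 s1.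
    have s2' : (size (fj a b c d 2 * G a b c d m'.+1 2)%R <= (9 * Ex m'.+1 + 9).+1)%N by lia.
    have s3 := size_comp3' s2'.
    have s4 := size_mulfj a b c d 1 s3.
    have s4' : (size (fj a b c d 1 * ((fj a b c d 2 * G a b c d m'.+1 2) \Po 'X^3))%R
       <= (3 * (9 * Ex m'.+1 + 9) + 9).+1)%N by lia.
    have s5 := size_comp3' s4'.
    have s6 := size_mulfj a b c d 0 s5.
    rewrite /P2; move: s6 => /=; lia.
  have hs : (size P2 <= 3 * #|F|.-1)%N by rewrite qE; lia.
  have := hP P2 _ P2x ht.
  rewrite (sum_poly hq0 q1 hs) !big_ord_recr big_ord0 /= add0r mul1n coefq hq km.
  have [_ hev] := Vnz b c d a0 m' 3.
  have [v4 v3] := hev em.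
  have -> : P2`_(2 * (3 ^ m'.+4).-1) = 0.
    have e3 : (3 ^ m'.+4 = 81 * (2 * Ex m').+1)%N by rewrite !expnS ExE; lia.
    have [m0|m0] := posnP m'.
      subst m'; rewrite (_ : (2 * (3 ^ 4).-1 = 162 - 2)%N) // -SC_coef //.
      exact: chase2_k4.
    apply: nth_default; rewrite e3.
    have : (0 < Ex m')%N by case: (m') m0.
    move=> hE; apply: leq_trans hs0 _; lia.
  rewrite addr0 chase2 //; move/eqP; rewrite oppr_eq0.
  by apply/negP; rewrite !mulf_neq0 // expf_neq0.
case: k hk hq Hgen Heven => [//|[|[|m]]] _ hq Hgen Heven.
-
  have ht : (0 < 1 < #|F|.-1)%N by rewrite hq.
  have hs : (size (fj a b c d 0) <= 4.+1 * #|F|.-1)%N.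
    by rewrite hq; apply: (leq_trans (size_fj _ _ _ _ _)).
  have hx : forall x, (fj a b c d 0).[x] = fx x ^+ 1 by move=> x; rewrite hfx expr1.
  have := hP (fj a b c d 0) 1 hx ht.
  rewrite (sum_poly hq0 q1 hs) hq !big_ord_recr big_ord0 /= !coef_fj /= expn0 !expr1.
  move/eqP; rewrite !(mulr0, mulr1, addr0, add0r) oppr_eq0.
  by rewrite (negbTE c0).
-
  have q9 : #|F| = 9%N by rewrite hq.
  have hs2 : (size (fj a b c d 0 * fj a b c d 0)%R <= 2.+1 * #|F|.-1)%N.
    apply: (leq_trans (size_mulfj _ _ _ _ _ (size_fj a b c d 0))); by rewrite q9.
  have hx2 : forall x, (fj a b c d 0 * fj a b c d 0).[x] = fx x ^+ 2.
    by move=> x; rewrite hornerM hfx expr2.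
  have ht2 : (0 < 2 < #|F|.-1)%N by rewrite q9.
  have := hP _ 2 hx2 ht2.
  rewrite (sum_poly hq0 q1 hs2) q9 !big_ord_recr big_ord0 /= add0r.
  rewrite -(SC_coef _ (Q:=9) (N:=1)) // -(SC_coef _ (Q:=18) (N:=2)) // q9_t2.
  move/eqP; rewrite oppr_eq0 !mulf_eq0 (negbTE two0) (negbTE a0) /= => /eqP b0.
  have hs5 : (size (P9 a b c d) <= 5.+1 * #|F|.-1)%N.
    have s1 := size_comp3' (size_fj a b c d 1).
    have s2 := size_mulfj a b c d 0 s1.
    have s2' : (size (fj a b c d 0 * (fj a b c d 1 \Po 'X^3))%R <= 36.+1)%N by lia.
    have s3 := size_mulfj a b c d 0 s2'.
    by rewrite q9; apply: (leq_trans s3).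
  have hx5 : forall x, (P9 a b c d).[x] = fx x ^+ 5.
    move=> x; rewrite /P9 hornerM hornerM horner_comp hornerXn -fj_frob // hfx.
    by rewrite -exprS -exprS.
  have ht5 : (0 < 5 < #|F|.-1)%N by rewrite q9.
  have := hP _ 5 hx5 ht5.
  rewrite (sum_poly hq0 q1 hs5) q9 !big_ord_recr big_ord0 /= add0r.
  rewrite -(SC_coef _ (Q:=9) (N:=1)) // -(SC_coef _ (Q:=18) (N:=2)) //.
  rewrite -(SC_coef _ (Q:=27) (N:=3)) // -(SC_coef _ (Q:=36) (N:=4)) //.
  rewrite -(SC_coef _ (Q:=45) (N:=5)) // q9_t5 //.
  move/eqP; rewrite oppr_eq0 mulf_eq0 expf_eq0 (negbTE c0) andbF /= => /eqP hD.
  have x9 : forall x : F, x ^+ 9 = x by move=> x; rewrite -q9 expf_card.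
  set D := 1 + d in hD.
  have fxE : forall x, fx x = x * (D + a * x ^+ 4 + c * x).
    by move=> x; rewrite /fx /D b0 x9; ring.
  have h3 : (3%:R : F) = 0 := pcharf0 p3.
  have u8 : forall y : F, y != 0 -> y ^+ 8 = 1.
    by move=> y y0; have := unit_pow y0; rewrite q9.
  have u4 : forall y : F, y != 0 -> y ^+ 4 = 1 \/ y ^+ 4 = -1.
    move=> y y0; have : (y ^+ 4 - 1) * (y ^+ 4 + 1) = 0.
      by rewrite mulrDr mulr1 mulrBl mul1r -exprD u8 // addrA subrK subrr.
    by move/eqP; rewrite mulf_eq0 subr_eq0 addr_eq0 => /orP [] /eqP; [left|right].
  have fx0 : fx 0 = 0 by rewrite fxE mul0r.
  have root : forall y, y != 0 -> D + a * y ^+ 4 + c * y = 0 -> False.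
    move=> y y0 hy; have : fx y = fx 0 by rewrite fx0 fxE hy mulr0.
    by move/inj => /eqP; rewrite (negbTE y0).
  have twoa : 2%:R * a ^+ 2 != 0 by rewrite mulf_neq0 // expf_neq0.
  have Dpa : D + a != 0.
    apply/eqP => h; have e : D = - a by apply/eqP; rewrite -addr_eq0 h.
    rewrite e sqrrN -mulr2n -mulr_natl in hD.
    by rewrite hD eqxx in twoa.
  have Dma : D - a != 0.
    apply/eqP => h; have e : D = a by apply/eqP; rewrite -subr_eq0 h.
    rewrite e -mulr2n -mulr_natl in hD.
    by rewrite hD eqxx in twoa.
  set x1 := - (D + a) / c.
  set x2 := - (D - a) / c.
  have x10 : x1 != 0 by rewrite mulf_neq0 ?oppr_eq0 ?invr_eq0.
  have x20 : x2 != 0 by rewrite mulf_neq0 ?oppr_eq0 ?invr_eq0.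
  have prod : x1 * x2 = (a / c) ^+ 2.
    apply/eqP; rewrite -subr_eq0.
    have -> : x1 * x2 - (a / c) ^+ 2 = ((D ^+ 2 + a ^+ 2) - 3%:R * a ^+ 2) / c ^+ 2.
      by rewrite /x1 /x2; field.
    by rewrite hD h3 mul0r subrr mul0r.
  have prod4 : x1 ^+ 4 * x2 ^+ 4 = 1.
    by rewrite -exprMn prod -exprM u8 // mulf_neq0 ?invr_eq0.
  case: (u4 x1 x10) => h1.
    by apply: (root x1 x10); rewrite h1 mulr1 /x1; field.
  apply: (root x2 x20).
  have h2 : x2 ^+ 4 = -1.
    by move: prod4; rewrite h1 mulN1r => /eqP; rewrite eqr_oppLR => /eqP.
  by rewrite h2 mulrN1 /x2; field.
- have [om|em] := boolP (odd m.+1).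
    have := Hgen m.+1 erefl erefl.
    have [-> nz] := (Vnz b c d a0 m.+1 1).1 om.
    rewrite mulr0 addr0 => /eqP; rewrite !mulf_eq0 (negbTE two0) (negbTE c0) /=.
    by rewrite (negbTE nz).
  have := Hgen m.+1 erefl erefl.
  have [v4 nz] := (Vnz b c d a0 m.+1 1).2 em.
  rewrite v4 mulr0 add0r => /eqP; rewrite !mulf_eq0 (negbTE two0) (negbTE a0) (negbTE nz) /=.
  rewrite orbF => /eqP b0.
  clear v4 nz; case: m hq em Hgen Heven => [//|m] hq em Hgen Heven.
  by apply: (Heven m erefl _ b0); move: em => /=; rewrite negbK.
Qed.
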